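(* Let $n>1$ be an integer and $\nu_n(x)=\sum_{d\mid n}\mu(d)\{x/d\}$. Then $$\sum_{a\in U_n}\nu_n(a)\,a=-\frac{n\phi(n)}{4}+n\sum_{d_1\mid n}\sum_{d_2\mid n}\mu(d_1)\mu(d_2)\,s\!\left(\frac{n}{d_1},\frac{n}{d_2}\right).$$
   Context: $U_n$ is the set of positive integers less than $n$ and coprime with $n$; $\{y\}$ is the fractional part; $\mu$ is the Möbius function, $\phi$ Euler's totient function. For positive integers $b,a$ (no coprimality assumed), $s(b,a)=\sum_{k=1}^{a}\left(\left(\frac{kb}{a}\right)\right)\left(\left(\frac{k}{a}\right)\right)$, where $((x))=\{x\}-\tfrac12$ if $x\notin\mathbb{Z}$ and $((x))=0$ if $x\in\mathbb{Z}$. *)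

(* Defs.v *)
From mathcomp Require Import all_boot all_order all_algebra.
Set Implicit Arguments. Unset Strict Implicit. Unset Printing Implicit Defensive.
Import Order.TTheory GRing.Theory Num.Theory.
Local Open Scope ring_scope.

(* Möbius function: 0 if n has a square factor (or n = 0), else (-1)^(number of primes). *)
Definition moebius (n : nat) : int :=
  if (0 < n)%N && all (fun p => logn p n == 1)%N (primes n)
  then (-1) ^+ size (primes n) else 0.

Definition frac (x : rat) : rat := x - (Num.floor x)%:~R.

Definition saw (x : rat) : rat :=
  if x \is a Num.int then 0 else frac x - 1 / 2.

Definition dedekind_sum (b a : nat) : rat :=
  \sum_(1 <= k < a.+1) saw ((k * b)%:R / a%:R) * saw (k%:R / a%:R).

Definition nu (n : nat) (x : rat) : rat :=
  \sum_(d <- divisors n) (moebius d)%:~R * frac (x / d%:R).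

Definition U (n : nat) : seq nat := [seq a <- iota 1 n.-1 | coprime a n].

(* Main.v *)
Require Import Defs.
From mathcomp Require Import all_boot all_order all_algebra.
From mathcomp Require Import zify ring lra.
Set Implicit Arguments. Unset Strict Implicit. Unset Printing Implicit Defensive.
Import Order.TTheory GRing.Theory Num.Theory.
Local Open Scope ring_scope.

Lemma mu1 : moebius 1 = 1.
Proof. by rewrite /moebius. Qed.

Lemma mu_pe p e : prime p -> ~~ (p %| e)%N -> (0 < e)%N ->
  moebius (p * e) = - moebius e.
Proof.
move=> pp npe e0; have p0 := prime_gt0 pp.
have pe : perm_eq (primes (p * e)) (p :: primes e).
  apply: uniq_perm; first exact: primes_uniq.
    by rewrite /= primes_uniq andbT mem_primes; apply/negP => /and3P[_ _]; exact/negP.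
  by move=> q; rewrite primesM // primes_prime // !inE.
rewrite /moebius muln_gt0 p0 e0 /= (perm_all _ pe) (perm_size pe) /=.
have -> : (logn p (p * e) == 1)%N.
  by rewrite lognM // logn_prime // eqxx logn_coprime ?prime_coprime.
have -> : all (fun q => logn q (p * e) == 1)%N (primes e) =
          all (fun q => logn q e == 1)%N (primes e).
  apply: eq_in_all => q; rewrite mem_primes => /and3P[pq _ qe].
  rewrite logn_Gauss // prime_coprime // dvdn_prime2 //.
  by apply: contra npe => /eqP <-.
by case: (all _ (primes e)) => /=; rewrite ?oppr0 // exprS mulN1r.
Qed.

Lemma mu_sq p d : prime p -> (p ^ 2 %| d)%N -> moebius d = 0.
Proof.
move=> pp pd; rewrite /moebius; case: (posnP d) => [->//|d0].
case: ifP => // /andP[_ /allP H].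
have : p \in primes d.
  by rewrite mem_primes pp d0 (dvdn_trans _ pd) // dvdn_exp.
move/H; rewrite (pfactor_dvdn 2 pp d0) in pd; move/eqP => e; rewrite e in pd.
by [].
Qed.

Lemma mu_sum g : (1 < g)%N -> \sum_(d <- divisors g) moebius d = 0.
Proof.
move=> g1; set p := pdiv g; have pp : prime p := pdiv_prime g1.
have p0 := prime_gt0 pp; have g0 : (0 < g)%N by apply: ltnW.
have pg : (p %| g)%N := pdiv_dvd g.
have gE : g = (p * (g %/ p))%N by rewrite mulnC divnK.
have h0 : (0 < g %/ p)%N by rewrite divn_gt0 // dvdn_leq.
have injp : injective (muln p).
  by move=> x y /eqP; rewrite eqn_pmul2l // => /eqP.
rewrite (bigID (fun d => p %| d)%N) /=.
have -> : \sum_(d <- divisors g | (p %| d)%N) moebius d =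
          \sum_(e <- divisors (g %/ p)) moebius (p * e).
  rewrite -big_filter -(big_map (muln p) xpredT).
  apply: perm_big; apply: uniq_perm.
  - by rewrite filter_uniq // divisors_uniq.
  - by rewrite map_inj_uniq // divisors_uniq.
  move=> x; rewrite mem_filter -dvdn_divisors //.
  apply/idP/idP.
    case/andP => /dvdnP[y ->] xg; rewrite mulnC; apply: map_f.
    by rewrite -dvdn_divisors // -(dvdn_pmul2l p0) -gE mulnC.
  case/mapP => y; rewrite -dvdn_divisors // => yd ->.
  by rewrite dvdn_mulr //= gE dvdn_pmul2l.
have -> : \sum_(d <- divisors g | ~~ (p %| d)%N) moebius d =
          \sum_(e <- divisors (g %/ p) | ~~ (p %| e)%N) moebius e.
  rewrite -big_filter -[RHS]big_filter.
  apply: perm_big; apply: uniq_perm.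
  - by rewrite filter_uniq // divisors_uniq.
  - by rewrite filter_uniq // divisors_uniq.
  move=> x; rewrite !mem_filter -!dvdn_divisors //.
  apply/andP/andP => [] [npx xd]; split => //.
    by rewrite -(@Gauss_dvdr _ p) -?gE // coprime_sym prime_coprime.
  by rewrite gE dvdn_mull.
rewrite (bigID (fun e => p %| e)%N) /=.
rewrite big1 ?add0r; last first.
  move=> e /dvdnP[k ->]; apply: (mu_sq pp).
  by rewrite mulnC -mulnA dvdn_mull // -expnSr expn1.
rewrite big_seq_cond [X in _ + X]big_seq_cond -big_split /= big1 // => e.
case/andP; rewrite -dvdn_divisors // => ed npe.
rewrite mu_pe ?addNr //; exact: dvdn_gt0 h0 ed.
Qed.

Lemma mu_sum_gcd n m : (0 < n)%N ->
  \sum_(d <- divisors n | (d %| m)%N) moebius d = (coprime m n)%:Z.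
Proof.
move=> n0; have g0 : (0 < gcdn m n)%N by rewrite gcdn_gt0 n0 orbT.
rewrite -big_filter.
rewrite (perm_big (divisors (gcdn m n))); last first.
  apply: uniq_perm; rewrite ?filter_uniq ?divisors_uniq // => x.
  by rewrite mem_filter -!dvdn_divisors // dvdn_gcd andbC.
rewrite /coprime; case: (ltngtP (gcdn m n) 1) => [g1|g1|->].
- by rewrite ltnNge g0 in g1.
- by rewrite mu_sum // gtn_eqF.
by have -> : divisors 1 = [:: 1%N] by []; rewrite big_cons big_nil mu1.
Qed.

Lemma divE_nat (m d : nat) : (0 < d)%N ->
  (m%:R / d%:R : rat) = (m %/ d)%:R + (m %% d)%:R / d%:R.
Proof.
move=> d0; rewrite {1}(divn_eq m d) natrD natrM mulrDl mulfK //.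
by rewrite pnatr_eq0 -lt0n.
Qed.

Lemma floor_nat (m d : nat) : (0 < d)%N ->
  Num.floor (m%:R / d%:R : rat) = (m %/ d)%:Z.
Proof.
move=> d0; apply: floor_def; rewrite divE_nat // intrD -!pmulrn.
rewrite lerDl divr_ge0 ?ler0n //= ltrD2l ltr_pdivrMr ?ltr0n // mul1r ltr_nat.
by rewrite ltn_pmod.
Qed.

Lemma frac_nat (m d : nat) : (0 < d)%N ->
  Defs.frac (m%:R / d%:R) = (m %% d)%:R / d%:R.
Proof.
by move=> d0; rewrite /Defs.frac floor_nat // divE_nat // -pmulrn addrAC subrr add0r.
Qed.

Lemma int_nat (m d : nat) : (0 < d)%N ->
  ((m%:R / d%:R : rat) \is a Num.int) = (d %| m)%N.
Proof.
move=> d0; rewrite intrEfloor floor_nat // divE_nat // -pmulrn.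
rewrite eq_sym -subr_eq0 addrC addKr mulf_eq0 invr_eq0 !pnatr_eq0 (gtn_eqF d0) orbF.
by [].
Qed.

Lemma mu_sum_ne1 n : (1 < n)%N ->
  \sum_(d <- divisors n | d != 1%N) ((moebius d)%:~R : rat) = -1.
Proof.
move=> n1; have := mu_sum n1.
rewrite (bigD1_seq 1%N) ?divisor1 ?divisors_uniq //= mu1 => /eqP.
rewrite addrC addr_eq0 => /eqP h.
by rewrite -mulrz_sumr h.
Qed.

Lemma frac_sym n m d : (0 < d)%N -> (d %| n)%N -> ~~ (d %| m)%N -> (m <= n)%N ->
  Defs.frac (m%:R / d%:R) + Defs.frac ((n - m)%:R / d%:R) = 1.
Proof.
move=> d0 dn ndm mn; rewrite !frac_nat // -mulrDl -natrD.
suff -> : (m %% d + (n - m) %% d)%N = d by rewrite divff // pnatr_eq0 gtn_eqF.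
have h1 : (d %| m %% d + (n - m) %% d)%N.
  by rewrite /dvdn modnDm subnKC.
have h2 : (0 < m %% d)%N by rewrite lt0n.
have h3 := ltn_pmod m d0; have h4 := ltn_pmod (n - m) d0.
case/dvdnP: h1 => k hk; rewrite hk in h2 h3 h4 *.
have : k = 1%N by nia.
by move=> ->; rewrite mul1n.
Qed.

Lemma ndvd_cop n m d : coprime m n -> (d %| n)%N -> d != 1%N -> ~~ (d %| m)%N.
Proof.
move=> cop dn d1; apply/negP => dm.
have : (d %| gcdn m n)%N by rewrite dvdn_gcd dm dn.
by rewrite (eqP cop) dvdn1 (negbTE d1).
Qed.

Lemma nu_sym n m : (1 < n)%N -> (m < n)%N -> coprime m n ->
  nu n m%:R + nu n (n - m)%:R = -1.
Proof.
move=> n1 mn cop; have n0 : (0 < n)%N by apply: ltnW.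
rewrite /nu -big_split /= (bigD1_seq 1%N) ?divisor1 ?divisors_uniq //=.
rewrite !frac_nat // !modn1 mul0r addr0 mulr0 add0r -(mu_sum_ne1 n1).
rewrite big_seq_cond [RHS]big_seq_cond; apply: eq_bigr => d /andP[].
rewrite -dvdn_divisors // => dn d1.
have d0 : (0 < d)%N := dvdn_gt0 n0 dn.
by rewrite -mulrDr frac_sym ?mulr1 // ?(ndvd_cop cop) // ltnW.
Qed.

Lemma saw_nat (m d : nat) : (0 < d)%N ->
  saw (m%:R / d%:R) = if (d %| m)%N then 0 else Defs.frac (m%:R / d%:R) - 1 / 2.
Proof. by move=> d0; rewrite /saw int_nat. Qed.

Lemma g_nu n m : (1 < n)%N -> coprime m n ->
  \sum_(d <- divisors n) ((moebius d)%:~R * saw (m%:R / d%:R)) = nu n m%:R + 1 / 2.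
Proof.
move=> n1 cop; have n0 : (0 < n)%N by apply: ltnW.
rewrite /nu !(bigD1_seq 1%N) ?divisor1 ?divisors_uniq //=.
rewrite saw_nat // dvd1n frac_nat // modn1 !mul0r mulr0 !add0r.
have -> : \sum_(d <- divisors n | d != 1%N) ((moebius d)%:~R * saw (m%:R / d%:R))
  = \sum_(d <- divisors n | d != 1%N) ((moebius d)%:~R * Defs.frac (m%:R / d%:R))
    - 1 / 2 * \sum_(d <- divisors n | d != 1%N) ((moebius d)%:~R : rat).
  rewrite mulr_sumr -sumrB big_seq_cond [RHS]big_seq_cond; apply: eq_bigr => d /andP[].
  rewrite -dvdn_divisors // => dn d1.
  have d0 : (0 < d)%N := dvdn_gt0 n0 dn.
  by rewrite saw_nat // (negbTE (ndvd_cop cop dn d1)); ring.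
have -> : \sum_(d <- divisors n | d != 1%N) ((moebius d)%:~R : rat) = -1 by exact: mu_sum_ne1.
by rewrite mulrN1 opprK.
Qed.

Lemma sum_mult (F : nat -> rat) d N : (0 < d)%N ->
  \sum_(1 <= m < N.+1 | (d %| m)%N) F m = \sum_(1 <= k < (N %/ d).+1) F (k * d)%N.
Proof.
move=> d0; elim: N => [|N IH].
  by rewrite div0n !big_geq.
rewrite big_mkcond big_nat_recr //= -big_mkcond IH divnS //.
case: ifP => dN /=; last by rewrite add0n addr0.
rewrite add1n [in RHS]big_nat_recr //=; congr (_ + F _).
by have := divnS N d0; rewrite dN add1n => <-; rewrite divnK.
Qed.

Lemma ded_re n d1 d2 : (0 < n)%N -> (d1 %| n)%N -> (d2 %| n)%N ->
  dedekind_sum (n %/ d1) (n %/ d2) =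
  \sum_(1 <= m < n.+1 | (d2 %| m)%N) saw (m%:R / d1%:R) * saw (m%:R / n%:R).
Proof.
move=> n0 h1 h2; have d10 := dvdn_gt0 n0 h1; have d20 := dvdn_gt0 n0 h2.
rewrite (sum_mult _ _ d20) /dedekind_sum; apply: eq_bigr => k _.
have u1 : (d1%:R : rat) != 0 by rewrite pnatr_eq0 gtn_eqF.
have u2 : (d2%:R : rat) != 0 by rewrite pnatr_eq0 gtn_eqF.
have u0 : (n%:R : rat) != 0 by rewrite pnatr_eq0 gtn_eqF.
have u3 : (n%:R / d2%:R : rat) != 0 by rewrite mulf_neq0 ?invr_eq0.
rewrite !natrM !natr_div ?unitfE //.
by congr (saw _ * saw _); field; rewrite ?u0 ?u1 ?u2.
Qed.

Lemma cop_rev n m : (m <= n)%N -> coprime (n - m) n = coprime m n.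
Proof.
move=> mn; rewrite /coprime.
have e1 : gcdn (n - m) n = gcdn (n - m) m.
  by rewrite -{2}(subnK mn) gcdnDl.
have e2 : gcdn m n = gcdn m (n - m).
  by rewrite -{1}(subnKC mn) gcdnDl.
by rewrite e1 e2 gcdnC.
Qed.

Lemma sum_rev n (F : nat -> rat) :
  \sum_(1 <= m < n | coprime m n) F m = \sum_(1 <= m < n | coprime m n) F (n - m)%N.
Proof.
rewrite big_nat_rev /= big_nat_cond [RHS]big_nat_cond.
apply: eq_big => [m|m /andP[/andP[m1 mn] _]].
  rewrite add1n subSS; case: (boolP (1 <= m < n)%N) => //= /andP[m1 mn].
  by rewrite cop_rev // ltnW.
by rewrite add1n subSS.
Qed.

Lemma double0 (x : rat) : x + x = 0 -> x = 0.
Proof. by move=> h; lra. Qed.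

Lemma h_sum n : (1 < n)%N ->
  \sum_(1 <= m < n | coprime m n) (n%:R - m%:R + n%:R * nu n m%:R) = 0.
Proof.
move=> n1; apply: double0.
rewrite [X in _ + X]sum_rev -big_split big_nat_cond big1 // => m.
case/andP => /andP[m1 mn] cop.
rewrite {1}natrB; last exact: ltnW.
move: (nu_sym n1 mn cop).
move: (nu n m%:R) (nu n (n - m)%:R) => a b e.
move: (n%:R : rat) (m%:R : rat) => x y.
change (x - y + x * a + (x - (x - y) + x * b) = 0).
have -> : b = -1 - a by lra.
ring.
Qed.

Lemma dbl n (G : nat -> nat -> rat) : (0 < n)%N ->
  \sum_(d1 <- divisors n) \sum_(d2 <- divisors n)
     (moebius d1)%:~R * (moebius d2)%:~R * \sum_(1 <= m < n.+1 | (d2 %| m)%N) G d1 m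
  = \sum_(1 <= m < n.+1 | coprime m n) \sum_(d1 <- divisors n) (moebius d1)%:~R * G d1 m.
Proof.
move=> n0.
transitivity (\sum_(d1 <- divisors n) \sum_(1 <= m < n.+1 | coprime m n)
               (moebius d1)%:~R * G d1 m); last by rewrite exchange_big.
apply: eq_bigr => d1 _.
transitivity (\sum_(d2 <- divisors n) \sum_(1 <= m < n.+1)
   (if (d2 %| m)%N then (moebius d1)%:~R * (moebius d2)%:~R * G d1 m else 0)).
  by apply: eq_bigr => d2 _; rewrite mulr_sumr big_mkcond.
rewrite exchange_big /= [RHS]big_mkcond; apply: eq_bigr => m _.
rewrite -big_mkcond /=.
rewrite (eq_bigr (fun d2 => (moebius d2)%:~R * ((moebius d1)%:~R * G d1 m)));
  last by move=> d2 _; ring.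
rewrite -mulr_suml -mulrz_sumr mu_sum_gcd //.
by case: (coprime m n); rewrite ?mul1r ?mul0r.
Qed.

Lemma alg_id (a y x : rat) : x != 0 ->
  a * y - (- (x * 1 / 4) + x * ((a + 1 / 2) * (y / x - 1 / 2))) =
  1 / 2 * (x - y + x * a).
Proof. by move=> xnz; field. Qed.

Theorem mainTheorem10 (n : nat) (hn : (1 < n)%N) :
  \sum_(a <- U n) nu n a%:R * a%:R =
    - (n%:R * (totient n)%:R / 4) +
    n%:R * \sum_(d1 <- divisors n) \sum_(d2 <- divisors n)
             (moebius d1)%:~R * (moebius d2)%:~R
             * dedekind_sum (n %/ d1) (n %/ d2).
Proof.
have n0 : (0 < n)%N by apply: ltnW.
have nR : (n%:R : rat) != 0 by rewrite pnatr_eq0 gtn_eqF.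
have -> : \sum_(d1 <- divisors n) \sum_(d2 <- divisors n)
             (moebius d1)%:~R * (moebius d2)%:~R
             * dedekind_sum (n %/ d1) (n %/ d2) =
   \sum_(1 <= m < n.+1 | coprime m n) \sum_(d1 <- divisors n)
       (moebius d1)%:~R * (saw (m%:R / d1%:R) * saw (m%:R / n%:R) : rat).
  rewrite -(dbl (fun d1 m => saw (m%:R / d1%:R) * saw (m%:R / n%:R))) //.
  rewrite big_seq [RHS]big_seq; apply: eq_bigr => d1 hd1.
  rewrite big_seq [RHS]big_seq; apply: eq_bigr => d2 hd2.
  by rewrite ded_re // dvdn_divisors.
have -> : \sum_(1 <= m < n.+1 | coprime m n) \sum_(d1 <- divisors n)
       (moebius d1)%:~R * (saw (m%:R / d1%:R) * saw (m%:R / n%:R) : rat) =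
   \sum_(1 <= m < n | coprime m n) ((nu n m%:R + 1 / 2) * (m%:R / n%:R - 1 / 2)).
  have cnn : coprime n n = false by rewrite /coprime gcdnn gtn_eqF.
  rewrite big_mkcond big_nat_recr //= cnn addr0 -big_mkcond.
  rewrite big_nat_cond [RHS]big_nat_cond; apply: eq_bigr => m /andP[/andP[m1 mn] cop].
  rewrite -(g_nu hn cop) mulr_suml.
  have -> : saw (m%:R / n%:R) = m%:R / n%:R - 1 / 2.
    rewrite saw_nat // (negbTE (ndvd_cop cop (dvdnn n) _)) ?(gtn_eqF hn) //.
    by rewrite frac_nat // modn_small.
  by apply: eq_bigr => d _; rewrite mulrA.
have -> : \sum_(a <- U n) nu n a%:R * a%:R =
          \sum_(1 <= m < n | coprime m n) nu n m%:R * m%:R.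
  by rewrite /U big_filter /index_iota subn1.
have -> : ((totient n)%:R : rat) = \sum_(1 <= m < n | coprime m n) 1.
  have cn0 : coprime n 0 = false by rewrite /coprime gcdn0 gtn_eqF.
  rewrite totient_count_coprime big_ltn // cn0 add0n natr_sum.
  rewrite [RHS]big_mkcond; apply: eq_bigr => m _.
  by rewrite coprime_sym; case: (coprime m n).
rewrite mulr_sumr mulr_suml -sumrN mulr_sumr -big_split /=.
apply/eqP; rewrite -subr_eq0 -sumrB.
rewrite (eq_bigr (fun m => 1 / 2 * (n%:R - m%:R + n%:R * nu n m%:R))).
  by rewrite -mulr_sumr h_sum // mulr0.
by move=> m _; apply: alg_id.
Qed.
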